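(* Let $(S,+,\cdot)$ be a left semi-brace. Then the semigroup $(S,+)$ is stationary on the right, i.e. for all $a,b,c,x\in S$, $a+b=a+c$ implies $x+b=x+c$. Consequently $(S,+)$ is a rectangular semigroup, and moreover: (1) the set $E(S)$ of idempotents of $(S,+)$ is a rectangular band; (2) an element $e\in S$ belongs to $E(S)$ if and only if $e$ is a middle unit of $(S,+)$, i.e. $a+e+b=a+b$ for all $a,b\in S$.
   Context: A left semi-brace is a triple $(S,+,\cdot)$ such that $(S,+)$ is a semigroup (not necessarily commutative), $(S,\cdot)$ is a group (with inverse $a^{-1}$ and identity $1$), and $a(b+c)=ab+a(a^{-1}+c)$ for all $a,b,c\in S$. A semigroup $(S,+)$ is rectangular if for all $a,b,x,y\in S$, $a+x=b+x=a+y$ implies $a+x=b+y$. A rectangular band is a rectangular semigroup all of whose elements are idempotent. *)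

(* Defs.v *)
Definition is_semigroup {S : Type} (add : S -> S -> S) : Prop :=
  forall a b c, add (add a b) c = add a (add b c).

Definition is_group {S : Type} (mul : S -> S -> S) (inv : S -> S) (one : S) : Prop :=
  (forall a b c, mul (mul a b) c = mul a (mul b c)) /\
  (forall a, mul one a = a) /\ (forall a, mul a one = a) /\
  (forall a, mul (inv a) a = one) /\ (forall a, mul a (inv a) = one).

Definition is_left_semi_brace {S : Type} (add mul : S -> S -> S) (inv : S -> S) (one : S) : Prop :=
  is_semigroup add /\ is_group mul inv one /\
  (forall a b c, mul a (add b c) = add (mul a b) (mul a (add (inv a) c))).

Definition right_stationary {S : Type} (add : S -> S -> S) : Prop :=
  forall a b c x, add a b = add a c -> add x b = add x c.

Definition rectangular {S : Type} (add : S -> S -> S) : Prop :=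
  forall a b x y, add a x = add b x -> add b x = add a y -> add a x = add b y.

Definition idempotent {S : Type} (add : S -> S -> S) (e : S) : Prop := add e e = e.

(* E(S) is a rectangular band: a subsemigroup of (S,+), all of whose elements
   are idempotent, which is rectangular as a semigroup. *)
Definition idempotents_rectangular_band {S : Type} (add : S -> S -> S) : Prop :=
  (forall e f, idempotent add e -> idempotent add f -> idempotent add (add e f)) /\
  (forall a b x y, idempotent add a -> idempotent add b -> idempotent add x ->
     idempotent add y ->
     add a x = add b x -> add b x = add a y -> add a x = add b y).

Definition middle_unit {S : Type} (add : S -> S -> S) (e : S) : Prop :=
  forall a b, add (add a e) b = add a b.

(* Main.v *)
Require Import Defs.

Theorem proposition9 (S : Type) (add mul : S -> S -> S) (inv : S -> S) (one : S) :
  is_left_semi_brace add mul inv one ->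
  right_stationary add /\
  rectangular add /\
  idempotents_rectangular_band add /\
  (forall e : S, idempotent add e <-> middle_unit add e).
Proof.
  intros [Hass [[Mass [M1l [M1r [Mil Mir]]]] Hbr]].
  assert (inv1 : inv one = one).
  { rewrite <- (M1r (inv one)). apply Mil. }
  assert (invinv : forall a, inv (inv a) = a).
  { intro a. rewrite <- (M1r (inv (inv a))), <- (Mil a), <- Mass, Mil. apply M1l. }
  assert (cancel1 : forall a y, mul a (mul (inv a) y) = y).
  { intros a y. rewrite <- Mass, Mir. apply M1l. }
  assert (Lone : forall b c, add b (add one c) = add b c).
  { intros b c. pose proof (Hbr one b c) as H. rewrite !M1l, inv1 in H. congruence. }
  assert (key : forall a x b,
             add x b = mul a (add (mul (inv a) x) (mul (inv a) (add a b)))).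
  { intros a x b.
    pose proof (Hbr (inv a) one b) as H1. rewrite M1r, invinv in H1.
    rewrite (Hbr a). rewrite cancel1. rewrite <- H1. rewrite cancel1. symmetry. apply Lone. }
  assert (Hst : right_stationary add).
  { intros a b c x H. rewrite (key a x b), (key a x c), H. reflexivity. }
  assert (L1 : forall g y d,
             add y (mul g (add (inv g) d)) = mul g (add (mul (inv g) y) d)).
  { intros g y d. rewrite (Hbr g (mul (inv g) y) d), cancel1. reflexivity. }
  assert (Hrect : rectangular add).
  { intros a b x y H1 H2. rewrite H1. apply (Hst a x y b). congruence. }
  assert (Hmid : forall e, idempotent add e <-> middle_unit add e).
  { intro e. split.
    - intros He a b. rewrite Hass.
      apply (Hst e (add e b) b a). rewrite <- Hass, He. reflexivity.
    - intros Hm. unfold idempotent.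
      set (w := add e e).
      set (h := mul w (inv e)).
      assert (Hw : mul h e = w).
      { unfold h. rewrite Mass, Mil. apply M1r. }
      pose proof (L1 (inv h) e e) as H. rewrite invinv, Hw in H.
      assert (Hwe : add w e = w) by (unfold w; apply Hm).
      rewrite Hwe, <- Hw in H.
      assert (C2 : mul (inv h) (mul h e) = e) by (rewrite <- Mass, Mil; apply M1l).
      rewrite C2 in H.
      set (s := mul (inv h) (add h e)) in H.
      unfold w. transitivity (add e (add e s)).
      + f_equal. symmetry. exact H.
      + rewrite <- Hass, Hm. exact H. }
  split; [exact Hst|]. split; [exact Hrect|]. split; [|exact Hmid].
  split.
  - intros e f He Hf. unfold idempotent.
    pose proof (proj1 (Hmid f) Hf) as Mf.
    rewrite <- Hass, Mf. rewrite He. reflexivity.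
  - intros a b x y _ _ _ _. apply Hrect.
Qed.
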